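(* Let $G$ be a graph with vertex set $V$ and let $S,T$ be disjoint subsets of $V$. Then there exist a graph $G'$ on $V$ with $d_{G'}(v)=d_G(v)$ for all $v\in V$, and disjoint subsets $S',T'\subseteq V$ with $|S'|=|S|$ and $|T'|=|T|$, such that $d_{G'}(s)\le d_{G'}(v)$ for all $s\in S'$ and $v\in V\setminus S'$, $d_{G'}(t)\ge d_{G'}(v)$ for all $t\in T'$ and $v\in V\setminus T'$, and \[|E_{G'}(S';V\setminus T')|\le|E_G(S;V\setminus T)|.\]
   Context: All graphs are finite and simple; $d_G(v)$ is the degree of $v$ in $G$. For disjoint $S,T\subseteq V$, $E_G(S;V\setminus T)$ denotes the set of edges of $G$ that either have both endpoints in $S$, or have one endpoint in $S$ and the other in $V\setminus(S\cup T)$. *)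

(* Defs.v *)
From mathcomp Require Import all_boot.
Set Implicit Arguments. Unset Strict Implicit. Unset Printing Implicit Defensive.

Definition simple_graph (V : finType) (e : rel V) : Prop :=
  symmetric e /\ irreflexive e.

Definition deg (V : finType) (e : rel V) (v : V) : nat := #|[set u | e v u]|.

Definition edges (V : finType) (e : rel V) : {set {set V}} :=
  [set E : {set V} | [exists x, exists y, e x y && (E == [set x; y])]].

(* E_G(S; V \ T): edges with both ends in S, or one end in S and the other
   in V \ (S ∪ T). *)
Definition E_ST (V : finType) (e : rel V) (S T : {set V}) : {set {set V}} :=
  [set E : {set V} | [exists x, exists y,
     [&& e x y, E == [set x; y], x \in S &
         (y \in S) || (y \notin S :|: T)]]].

(* Main.v *)
Require Import Defs.
From mathcomp Require Import all_boot zify.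
Set Implicit Arguments. Unset Strict Implicit. Unset Printing Implicit Defensive.

Section Aux.
Variable V : finType.

Definition sw (p q z : V) := if z == p then q else if z == q then p else z.

Lemma swK p q : cancel (sw p q) (sw p q).
Proof.
move=> z; rewrite /sw.
have [->|hp] := eqVneq z p; first by rewrite eqxx; case: eqVneq.
have [->|hq] := eqVneq z q; first by rewrite eqxx.
by rewrite (negbTE hp) (negbTE hq).
Qed.

Lemma swE p q z : z != p -> z != q -> sw p q z = z.
Proof. by move=> hp hq; rewrite /sw (negbTE hp) (negbTE hq). Qed.

Lemma swL p q : sw p q p = q. Proof. by rewrite /sw eqxx. Qed.
Lemma swR p q : sw p q q = p.
Proof. by rewrite /sw eqxx; case: eqVneq => [->|]. Qed.

Lemma sw_eq p q z x : (sw p q z == x) = (z == sw p q x).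
Proof. by apply/eqP/eqP => [<-|->]; rewrite swK. Qed.

Lemma card_pre (f : V -> V) (P : pred V) : injective f ->
  #|[set u | P (f u)]| = #|[set u | P u]|.
Proof.
move=> fi; have -> : [set u | P (f u)] = f @^-1: [set u | P u].
  by apply/setP=> u; rewrite !inE.
exact: card_preimset.
Qed.

Lemma sub_card (A : {set V}) k : k <= #|A| -> exists2 B : {set V}, B \subset A & #|B| = k.
Proof.
elim: k => [|k IH] hk; first by exists set0; rewrite ?sub0set ?cards0.
have [B hB cB] := IH (ltnW hk).
have : 0 < #|A :\: B| by rewrite cardsD (setIidPr hB) cB; lia.
move/card_gt0P => [x]; rewrite inE => /andP [xB xA].
exists (x |: B); last by rewrite cardsU1 xB cB.
by apply/subsetP => z; rewrite !inE => /orP [/eqP ->|/(subsetP hB)].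
Qed.

Lemma le_inj (A B : {set {set V}}) (psi : {set V} -> {set V}) :
  {in A &, injective psi} -> (forall E, E \in A -> psi E \in B) -> #|A| <= #|B|.
Proof.
move=> inj hAB; rewrite -(card_in_imset inj); apply: subset_leq_card.
by apply/subsetP => _ /imsetP [E hE ->]; apply: hAB.
Qed.

Lemma E_STP (e : rel V) (S T E : {set V}) : reflect (exists x y, [/\ e x y, E = [set x; y], x \in S &
   (y \in S) || (y \notin S :|: T)]) (E \in E_ST e S T).
Proof.
rewrite inE; apply: (iffP existsP) => [[x /existsP [y /and4P [h1 /eqP h2 h3 h4]]]|[x [y [h1 h2 h3 h4]]]].
  by exists x, y.
by exists x; apply/existsP; exists y; rewrite h1 h2 eqxx h3 h4.
Qed.

Lemma edge_mem (r : rel V) x y u w : symmetric r -> r x y ->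
  u \in [set x; y] -> w \in [set x; y] -> u != w -> r u w.
Proof.
move=> sy rxy /set2P [] -> /set2P [] -> //; rewrite ?eqxx // => _.
by rewrite sy.
Qed.

Lemma sum_sw (d : V -> nat) (A : {set V}) p q : d q < d p ->
  ~~ ((q \in A) && (p \notin A)) ->
  \sum_(x in sw p q @^-1: A) d x + (p \in A) * (q \notin A) <= \sum_(x in A) d x.
Proof.
move=> hd hA.
have pq : p != q by apply/eqP => e; rewrite e ltnn in hd.
rewrite (reindex_inj (can_inj (swK p q))) /=.
under eq_bigl do rewrite inE swK.
case pA: (p \in A); case qA: (q \in A); rewrite ?pA ?qA /= in hA *.
- rewrite muln0 addn0; apply: eq_leq.
  have Ainv : forall z, (sw p q z \in A) = (z \in A).
    move=> z.
    have [->|zp] := eqVneq z p; first by rewrite swL pA qA.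
    have [->|zq] := eqVneq z q; first by rewrite swR pA qA.
    by rewrite swE.
  rewrite [X in _ = X](reindex_inj (can_inj (swK p q))) /=.
  by apply: eq_bigl => z; rewrite Ainv.
- rewrite muln1 (bigD1 p) //= (bigD1 p pA) /= swL addnC addnA add1n.
  rewrite leq_add // eq_leq //; apply: eq_bigr => z /andP [zA zp].
  rewrite swE //; apply/eqP => e; by rewrite e qA in zA.
- by [].
- rewrite addn0 eq_leq //; apply: eq_bigr => z zA; rewrite swE //.
  + by apply/eqP => e; rewrite e pA in zA.
  + by apply/eqP => e; rewrite e qA in zA.
Qed.
End Aux.

Lemma core (V : finType) (e : rel V) (S T : {set V}) (p q : V) :
  simple_graph e -> deg e q < deg e p -> q \notin S -> p \notin T ->
  exists e' : rel V, simple_graph e' /\ (forall v, deg e' v = deg e v) /\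
   #|E_ST e' (sw p q @^-1: S) (sw p q @^-1: T)| <= #|E_ST e S T|.
Proof.
move=> [esym eirr] hd qS pT.
set t := sw p q.
have tK : cancel t t := swK p q.
have pq : p != q by apply/eqP => E; rewrite E ltnn in hd.
pose H : rel V := fun x y => e (t x) (t y).
have Hsym : symmetric H by move=> x y; rewrite /H esym.
have Hirr : irreflexive H by move=> x; rewrite /H eirr.
have dH : forall z, deg H z = deg e (t z).
  by move=> z; rewrite /deg (card_pre (fun u => e (t z) u) (can_inj tK)).
set a := q; set b := p.
have ab : (a == b) = false by apply/negbTE; rewrite eq_sym.
have ba : (b == a) = false by apply/negbTE.
have dHa : deg H a = deg e p by rewrite dH /t /a swR.
have dHb : deg H b = deg e q by rewrite dH /t /b swL.
pose N z := [set u | H z u].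
have cN : forall z, #|N z| = deg H z by [].
pose X := N a :\ b. pose Y := N b :\ a.
have cX : #|N a| = (b \in N a) + #|X| by rewrite (cardsD1 b).
have cY : #|N b| = (a \in N b) + #|Y| by rewrite (cardsD1 a).
have abN : (b \in N a) = (a \in N b) by rewrite !inE Hsym.
have cXY : #|X| - #|Y| <= #|X :\: Y|.
  by rewrite cardsD leq_sub2l // subset_leq_card // subsetIr.
have [A1 hA1 cA1] : exists2 A1 : {set V}, A1 \subset X :\: Y & #|A1| = deg e p - deg e q.
  apply: sub_card.
  by move: cXY cX cY; rewrite !cN dHa dHb abN; lia.
have hA : forall u, u \in A1 -> [/\ H a u, u != b, u != a & ~~ H b u].
  move=> u /(subsetP hA1); rewrite !inE => /andP [hY /andP [ub hau]].
  have ua : u != a by apply/eqP => E; rewrite E Hirr in hau.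
  by rewrite hau ub ua; rewrite ua /= in hY.
have aA1 : a \notin A1 by apply/negP => /hA [_ _ /eqP].
have bA1 : b \notin A1 by apply/negP => /hA [_ /eqP].
have A1N : A1 \subset N a by apply/subsetP => u /hA [h _ _ _]; rewrite inE.
pose e' : rel V := fun x y =>
  (H x y && ~~((x == a) && (y \in A1)) && ~~((y == a) && (x \in A1)))
  || ((x == b) && (y \in A1)) || ((y == b) && (x \in A1)).
have e'sym : symmetric e'.
  move=> x y; rewrite /e' Hsym.
  move: (H y x) (x == a) (y == a) (x == b) (y == b) (x \in A1) (y \in A1).
  by do 7 case.
have e'irr : irreflexive e'.
  move=> x; rewrite /e' Hirr /= orbb; apply/negP => /andP [/eqP E].
  by rewrite E (negbTE bA1).
exists e'; split; first by [].
split.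
  move=> z; rewrite {1}/deg.
  have [->|za] := eqVneq z a.
    have -> : [set y | e' a y] = N a :\: A1.
      apply/setP => y; rewrite !inE /e' eqxx ab (negbTE aA1) /= !andbF !orbF andbT.
      by case: (y \in A1); rewrite ?andbT ?andbF ?orbF.
    rewrite cardsD (setIidPr A1N) cN dHa cA1 /a; lia.
  have [->|zb] := eqVneq z b.
    have -> : [set y | e' b y] = N b :|: A1.
      apply/setP => y; rewrite !inE /e' eqxx ba (negbTE bA1) /= !andbF !orbF andbT.
      by rewrite andbT.
    rewrite cardsU cN dHb cA1 /b.
    have -> : N b :&: A1 = set0.
      apply/setP => u; rewrite !inE; apply/negP => /andP [h /hA [_ _ _]].
      by rewrite h.
    rewrite cards0; lia.
  have tz : t z = z by rewrite /t swE.
  case zA: (z \in A1).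
    have -> : [set y | e' z y] = b |: (N z :\ a).
      apply/setP => y; rewrite !inE /e' zA (negbTE za) (negbTE zb) /= !andbT.
      by rewrite orbF; case: (y == a); case: (y == b); rewrite ?andbF ?andbT ?orbT ?orbF.
    have bN : b \notin N z :\ a.
      by rewrite !inE negb_and Hsym; have [_ _ _ ->] := hA z zA; rewrite orbT.
    have haz : a \in N z by rewrite inE Hsym; have [] := hA z zA.
    rewrite cardsU1 bN; have := cardsD1 a (N z); rewrite haz cN dH tz. by move=> ->.
  have -> : [set y | e' z y] = N z.
    apply/setP => y; rewrite !inE /e' zA (negbTE za) (negbTE zb) /= !andbF !orbF.
    by rewrite andbT andbT.
  by rewrite cN dH tz.
set S' := t @^-1: S; set T' := t @^-1: T.
have bS' : b \notin S' by rewrite inE /t /b swL.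
have aT' : a \notin T' by rewrite inE /t /a swR.
apply: (@leq_trans #|E_ST H S' T'|).
  pose md (E : {set V}) := (b \in E) && (E :\ b \subset A1).
  pose psi (E : {set V}) := if md E then a |: (E :\ b) else E.
  have mdx : forall E, E \in E_ST e' S' T' -> md E -> exists2 x, x \in A1 & x \in E.
    move=> E /E_STP [x [y [hxy -> _ _]]] /andP [_ hs].
    have xy : x != y by apply/eqP => Exy; rewrite Exy e'irr in hxy.
    have [xb|xb] := eqVneq x b.
      exists y; last by rewrite set22.
      by apply: (subsetP hs); rewrite !inE eqxx orbT andbT -xb eq_sym.
    by exists x; [apply: (subsetP hs); rewrite !inE eqxx xb|rewrite set21].
  have aE : forall E, E \in E_ST e' S' T' -> md E -> a \notin E :\ b.
    by move=> E _ /andP [_ hs]; apply/negP => /(subsetP hs); rewrite (negbTE aA1).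
  have mixed : forall E1 E2, E1 \in E_ST e' S' T' -> E2 \in E_ST e' S' T' ->
      md E1 -> ~~ md E2 -> psi E1 = psi E2 -> False.
    move=> E1 E2 h1 h2 m1 m2; rewrite /psi m1 (negbTE m2) => E.
    have [x xA xE] := mdx E1 h1 m1.
    move: h2 => /E_STP [x2 [y2 [hxy E2e _ _]]].
    have [_ xb xa _] := hA x xA.
    have : e' a x.
      apply: (edge_mem e'sym hxy); rewrite -?E2e -?E ?inE ?eqxx //.
        by rewrite xb xE orbT.
      by rewrite eq_sym.
    rewrite /e' eqxx ab (negbTE aA1) xA /=. by rewrite !andbF.
  apply: (@le_inj _ _ _ psi).
    move=> E1 E2 h1 h2.
    case m1: (md E1); case m2: (md E2).
    - rewrite /psi m1 m2 => E.
      have : E1 :\ b = E2 :\ b.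
        by rewrite -(setU1K (aE _ h1 m1)) E setU1K // aE.
      move: m1 m2 => /andP [b1 _] /andP [b2 _] E'.
      by rewrite -(setD1K b1) E' setD1K.
    - by move=> E; exfalso; apply: (mixed _ _ h1 h2); rewrite ?m1 ?m2.
    - by move=> E; exfalso; apply: (mixed _ _ h2 h1); rewrite ?m1 ?m2.
    - by rewrite /psi m1 m2.
  move=> E /[dup] hE /E_STP [x [y [hxy Ee xS yS]]].
  have xy : x != y by apply/eqP => E'; rewrite E' e'irr in hxy.
  move: hxy; rewrite /e' => /orP [/orP [/andP [/andP [hH _] _]| /andP [/eqP xb _]]| /andP [/eqP yb xA]].
  - have -> : psi E = E.
      rewrite /psi; case m: (md E) => //; move: m => /andP [bE hs]; exfalso.
      move: bE; rewrite Ee => /set2P [] bxy.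
        have : y \in A1 by apply: (subsetP hs); rewrite Ee !inE eqxx orbT andbT bxy eq_sym.
        by move/hA => [_ _ _]; rewrite bxy hH.
      have : x \in A1 by apply: (subsetP hs); rewrite Ee !inE eqxx bxy xy.
      by move/hA => [_ _ _]; rewrite bxy Hsym hH.
    by apply/E_STP; exists x, y.
  - by move: xS; rewrite xb (negbTE bS').
  - have hx := hA x xA; case: hx => hax xb xa _.
    have Es : E :\ b = [set x].
      apply/setP => z; rewrite Ee !inE yb.
      by case: (eqVneq z x) => [->|]; [rewrite xb | case: (z == b)].
    have -> : psi E = [set a; x].
      by rewrite /psi /md Es sub1set xA Ee yb set22.
    apply/E_STP; exists x, a; split => //.
    + by rewrite Hsym.
    + by apply/setP => z; rewrite !inE orbC.
    + by case aS: (a \in S') => //=; rewrite in_setU aS.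
have K : forall E : {set V}, t @^-1: (t @^-1: E) = E.
  by move=> E; apply/setP => z; rewrite !inE tK.
apply: (@le_inj _ _ _ (fun E => t @^-1: E)).
  by move=> E1 E2 _ _ h; rewrite -[E1]K h K.
move=> E /E_STP [x [y [hxy -> xS yS]]].
apply/E_STP; exists (t x), (t y); split => //.
- by apply/setP => z; rewrite !inE !sw_eq.
- by rewrite inE in xS.
- by move: yS; rewrite !inE.
Qed.

Definition goal (V : finType) (e : rel V) (S T : {set V}) :=
  exists (e' : rel V) (S' T' : {set V}),
    simple_graph e' /\
    (forall v, deg e' v = deg e v) /\
    [disjoint S' & T'] /\ #|S'| = #|S| /\ #|T'| = #|T| /\
    (forall s v, s \in S' -> v \notin S' -> deg e' s <= deg e' v) /\
    (forall t v, t \in T' -> v \notin T' -> deg e' v <= deg e' t) /\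
    #|E_ST e' S' T'| <= #|E_ST e S T|.

Lemma main (V : finType) n : forall (e : rel V) (S T : {set V}),
  simple_graph e -> [disjoint S & T] ->
  \sum_(x in S) deg e x + \sum_(x in ~: T) deg e x < n -> goal e S T.
Proof.
elim: n => [//|n IH] e S T se dST hn.
have step : forall p q, deg e q < deg e p -> q \notin S -> p \notin T ->
    (p \in S) || (q \in T) -> goal e S T.
  move=> p q hd qS pT pq.
  have [e' [se' [de' hE]]] := core se hd qS pT.
  set t := sw p q in hE.
  have tK : cancel t t := swK p q.
  have dST' : [disjoint t @^-1: S & t @^-1: T].
    have E0 : S :&: T = set0 by apply/eqP; rewrite setI_eq0.
    by rewrite -setI_eq0 -preimsetI E0; apply/eqP/setP => z; rewrite !inE.
  have h1 := @sum_sw _ (deg e) S p q hd.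
  have h2 := @sum_sw _ (deg e) (~: T) p q hd.
  rewrite qS /= in h1; rewrite !inE pT /= in h2.
  have [e'' [S'' [T'' [s'' [d'' [dj [cS [cT [c1 [c2 hE']]]]]]]]]] :
      goal e' (t @^-1: S) (t @^-1: T).
    apply: IH => //.
    rewrite -preimsetC.
    under eq_bigr do rewrite de'.
    under [X in _ + X < _]eq_bigr do rewrite de'.
    move: h1 h2 hn pq; rewrite -/t; case: (p \in S); case: (q \in T) => //=; lia.
  exists e'', S'', T''; do !split => //.
  - by move=> v; rewrite d''.
  - by rewrite cS card_preimset //; apply: can_inj tK.
  - by rewrite cT card_preimset //; apply: can_inj tK.
  - exact: leq_trans hE.
case vS: [exists s, exists v, [&& s \in S, v \notin S & deg e v < deg e s]].
  move/existsP: vS => [s /existsP [v /and3P [sS vS' hd]]].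
  by apply: (step s v) => //; [rewrite (disjointFr dST sS) | rewrite sS].
case vT: [exists t, exists v, [&& t \in T, v \notin T & deg e t < deg e v]].
  move/existsP: vT => [t /existsP [v /and3P [tT vT' hd]]].
  by apply: (step v t) => //; [rewrite (disjointFl dST tT) | rewrite tT orbT].
exists e, S, T; do !split => //.
- move=> s v sS vS'; rewrite leqNgt; apply: contraFN vS => hd.
  by apply/existsP; exists s; apply/existsP; exists v; rewrite sS vS' hd.
- move=> t v tT vT'; rewrite leqNgt; apply: contraFN vT => hd.
  by apply/existsP; exists t; apply/existsP; exists v; rewrite tT vT' hd.
Qed.

Theorem lemma15 (V : finType) (e : rel V) (S T : {set V}) :
  simple_graph e -> [disjoint S & T] ->
  exists (e' : rel V) (S' T' : {set V}),
    simple_graph e' /\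
    (forall v, deg e' v = deg e v) /\
    [disjoint S' & T'] /\ #|S'| = #|S| /\ #|T'| = #|T| /\
    (forall s v, s \in S' -> v \notin S' -> deg e' s <= deg e' v) /\
    (forall t v, t \in T' -> v \notin T' -> deg e' v <= deg e' t) /\
    #|E_ST e' S' T'| <= #|E_ST e S T|.
Proof. by move=> se dST; apply: (main (n := _.+1)) => //; apply: ltnSn. Qed.
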